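(* Let $X$ be a finite set with $n=|X|$, let $r\ge 2$, and let $\tau$ be a non-empty subset of $\binom{X}{r}$ with $L(\tau)=X$. If $\tau$ is thin, then: (i) $|\tau|\le n-r+1$; (ii) there exists $x\in X$ with $n_\tau(x)\le r-1$; (iii) for any subset $B\subseteq X$ with $|B|=r-1$, the (multi)collection of sets $\{S-B : S\in\tau\}$ has a system of distinct representatives.
   Context: $\binom{X}{r}$ denotes the set of $r$-element subsets of $X$. For a collection $\tau$ of subsets of $X$, $L(\tau)=\bigcup_{s\in\tau}s$. For $\tau\subseteq\binom{X}{r}$ non-empty, the excess is ${\rm exc}(\tau)=|L(\tau)|-|\tau|-(r-1)$, and $\tau$ is thin if ${\rm exc}(\tau')\ge 0$ for every non-empty $\tau'\subseteq\tau$. For $x\in X$, $n_\tau(x)$ is the number of sets in $\tau$ containing $x$. A collection of (not necessarily distinct) sets $B_1,\dots,B_m$ has a system of distinct representatives if one can choose $x_i\in B_i$ for each $i$ with $x_1,\dots,x_m$ pairwise distinct. *)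

(* Defs.v *)
From mathcomp Require Import all_boot all_order all_algebra.
Set Implicit Arguments. Unset Strict Implicit. Unset Printing Implicit Defensive.
Import GRing.Theory Num.Theory.

Definition Lset (X : finType) (tau : {set {set X}}) : {set X} :=
  \bigcup_(S in tau) S.

Definition exc (X : finType) (r : nat) (tau : {set {set X}}) : int :=
  (#|Lset tau|%:Z - #|tau|%:Z - (r%:Z - 1))%R.

Definition thin (X : finType) (r : nat) (tau : {set {set X}}) : Prop :=
  forall tau' : {set {set X}}, tau' \subset tau -> tau' != set0 ->
    (0 <= exc r tau')%R.

Definition ndeg (X : finType) (tau : {set {set X}}) (x : X) : nat :=
  #|[set S in tau | x \in S]|.

(* The family (B_S)_{S in tau} (indexed by tau, so repetitions allowed)
   has a system of distinct representatives. *)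
Definition has_SDR (X : finType) (tau : {set {set X}}) (Bf : {set X} -> {set X}) : Prop :=
  exists f : {set X} -> X,
    {in tau, forall S, f S \in Bf S} /\ {in tau &, injective f}.

(* Main.v *)
Require Import Defs.
From mathcomp Require Import all_boot all_order all_algebra zify.

Lemma bigcup_setD (I T : finType) (K : {set I}) (A : I -> {set T}) (U : {set T}) :
  \bigcup_(i in K) (A i :\: U) = (\bigcup_(i in K) A i) :\: U.
Proof.
apply/setP=> x; apply/bigcupP/idP.
  by case=> i iK; rewrite !inE => /andP[xU xA]; rewrite xU; apply/bigcupP; exists i.
by rewrite inE => /andP[xU /bigcupP[i iK xA]]; exists i; rewrite // inE xU.
Qed.

Lemma hall (I T : finType) (x0 : T) (A : I -> {set T}) (P : {set I}) :
  (forall J : {set I}, J \subset P -> #|J| <= #|\bigcup_(i in J) A i|) ->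
  exists f : I -> T, {in P, forall i, f i \in A i} /\ {in P &, injective f}.
Proof.
move: {2}#|P| (leqnn #|P|) => n; elim: n A P => [|n IH] A P hP hH.
  move: hP; rewrite leqn0 cards_eq0 => /eqP ->.
  by exists (fun _ => x0); split=> [i|i j]; rewrite inE.
case: (boolP [exists J : {set I}, [&& J \subset P, J != set0, J != P &
         #|\bigcup_(i in J) A i| <= #|J|]]).
  case/existsP=> J /and4P[sJP nJ0 nJP hJ].
  set U := \bigcup_(i in J) A i.
  have hJeq : #|U| = #|J| by apply/eqP; rewrite eqn_leq hJ hH.
  have ltJ : #|J| < #|P| by rewrite proper_card // properEneq sJP nJP.
  have [f1 [f1A f1i]] : exists f : I -> T, {in J, forall i, f i \in A i} /\ {in J &, injective f}.
    apply: IH; first by lia.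
    by move=> K sKJ; apply: hH; apply: subset_trans sKJ sJP.
  have [j jJ] : exists j, j \in J by apply/set0Pn.
  have ltD : #|P :\: J| < #|P|.
    rewrite proper_card //; apply/properP; split; first exact: subsetDl.
    by exists j; [apply: (subsetP sJP) | rewrite inE jJ].
  have [f2 [f2A f2i]] : exists f : I -> T, {in P :\: J, forall i, f i \in A i :\: U} /\ {in P :\: J &, injective f}.
    apply: IH; first by lia.
    move=> K sK; rewrite bigcup_setD.
    have sKJ : K :|: J \subset P.
      rewrite subUset sJP andbT; apply: subset_trans sK _; exact: subsetDl.
    have := hH _ sKJ; rewrite bigcup_setU -/U.
    have dKJ : K :&: J = set0.
      apply/setP=> i; rewrite !inE; apply/negbTE/negP => /andP[iK iJ].
      by move: (subsetP sK i iK); rewrite inE iJ.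
    have := cardsUI K J; rewrite dKJ cards0 addn0.
    have := cardsUI (\bigcup_(i in K) A i) U.
    have := cardsID U (\bigcup_(i in K) A i).
    have := cardsID U (\bigcup_(i in K) A i :|: U).
    have -> : (\bigcup_(i in K) A i :|: U) :&: U = U by apply/setIidPr; apply: subsetUr.
    have -> : (\bigcup_(i in K) A i :|: U) :\: U = \bigcup_(i in K) A i :\: U.
      by rewrite setDUl setDv setU0.
    have := subset_leq_card (subsetIr (\bigcup_(i in K) A i) U).
    lia.
  exists (fun i => if i \in J then f1 i else f2 i); split.
    move=> i iP; case: ifP => iJ; first exact: f1A.
    by have := f2A i; rewrite !inE iJ iP => /(_ isT) /andP[].
  move=> i k iP kP; case: ifP => iJ; case: ifP => kJ.
  - exact: f1i.
  - move=> e; have := f2A k; rewrite !inE kJ kP => /(_ isT) /andP[/negP[]].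
    by rewrite -e; apply/bigcupP; exists i => //; apply: f1A.
  - move=> e; have := f2A i; rewrite !inE iJ iP => /(_ isT) /andP[/negP[]].
    by rewrite e; apply/bigcupP; exists k => //; apply: f1A.
  - by apply: f2i; rewrite inE ?iJ ?kJ.
rewrite negb_exists => /forallP hS.
have hS' : forall J : {set I}, J \subset P -> J != set0 -> J != P -> #|J| < #|\bigcup_(i in J) A i|.
  move=> J sJ nJ nJP; have := hS J; rewrite sJ nJ nJP /=; rewrite -ltnNge; exact.
case: (set_0Vmem P) => [->|[i0 i0P]].
  by exists (fun _ => x0); split=> [i|i j]; rewrite inE.
have : 0 < #|A i0|.
  by have := hH [set i0]; rewrite big_set1 cards1 sub1set i0P => /(_ isT).
rewrite card_gt0 => /set0Pn[x xA].
have [f [fA fi]] : exists f : I -> T, {in P :\ i0, forall i, f i \in A i :\ x} /\ {in P :\ i0 &, injective f}.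
  apply: IH.
    by move: hP; rewrite (cardsD1 i0 P) i0P.
  move=> K sK; rewrite bigcup_setD.
  case: (set_0Vmem K) => [->|[k kK]]; first by rewrite cards0.
  have sKP : K \subset P by apply: subset_trans sK _; apply: subsetDl.
  have nKP : K != P.
    by apply/eqP=> eKP; move: (subsetP sK i0); rewrite eKP i0P !inE eqxx => /(_ isT).
  have nK0 : K != set0 by apply/set0Pn; exists k.
  have := hS' K sKP nK0 nKP.
  have := cardsD1 x (\bigcup_(i in K) A i).
  case: (x \in _); lia.
exists (fun i => if i == i0 then x else f i); split.
  move=> i iP; case: eqP => [->//|/eqP ni].
  by have := fA i; rewrite !inE ni iP => /(_ isT) /andP[].
move=> i k iP kP; case: eqP => [->|/eqP ni]; case: eqP => [->//|/eqP nk].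
- move=> e; have := fA k; rewrite !inE nk kP => /(_ isT) /andP[/negP[]].
  by rewrite -e.
- move=> e; have := fA i; rewrite !inE ni iP => /(_ isT) /andP[/negP[]].
  by rewrite e.
- by apply: fi; rewrite !inE ?ni ?nk.
Qed.
Local Open Scope nat_scope.

Lemma thin_nat (X : finType) (r : nat) (tau tau' : {set {set X}}) :
  1 <= r -> thin r tau -> tau' \subset tau -> tau' != set0 ->
  #|tau'| + r - 1 <= #|Lset tau'|.
Proof.
move=> r1 th s n; have := th _ s n; rewrite /exc.
lia.
Qed.

Theorem lemma1 (X : finType) (r : nat) (tau : {set {set X}}) :
  (2 <= r)%N ->
  tau != set0 ->
  (forall S, S \in tau -> #|S| = r) ->
  Lset tau = [set: X] ->
  thin r tau ->
  [/\ (#|tau| <= #|X| - r + 1)%N,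
      (exists x : X, (ndeg tau x <= r - 1)%N)
    & (forall B : {set X}, #|B| = r.-1 ->
         has_SDR tau (fun S => S :\: B))].
Proof.
move=> r2 tn tr tL th.
have hi : #|tau| <= #|X| - r + 1.
  have := @thin_nat X r tau tau (ltnW r2) th (subxx tau) tn; rewrite tL cardsT; lia.
have [S0 S0t] := set0Pn _ tn.
have XS : r <= #|X| by rewrite -(tr _ S0t) max_card.
split=> //.
  case: (boolP [exists x, ndeg tau x <= r - 1]) => [/existsP//|].
  rewrite negb_exists => /forallP hx.
  have hx' : forall x, r <= ndeg tau x by move=> x; have := hx x; lia.
  have nd : forall x, ndeg tau x = \sum_(S in tau) (x \in S).
    move=> x; rewrite /ndeg -sum1_card big_mkcond /= [RHS]big_mkcond /=.
    by apply: eq_bigr => S _; rewrite inE; case: (S \in tau); case: (x \in S).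
  have e1 : \sum_x ndeg tau x = #|tau| * r.
    under eq_bigr do rewrite nd.
    rewrite exchange_big /= -sum_nat_const; apply: eq_bigr => S St.
    rewrite -(tr _ St) -sum1_card big_mkcond /= [RHS]big_mkcond /=.
    by apply: eq_bigr => x _; case: (x \in S).
  have : \sum_(x : X) r <= \sum_x ndeg tau x by apply: leq_sum => x _; exact: hx'.
  rewrite e1 sum_nat_const.
  rewrite leq_pmul2r; last by lia.
  have eX : #|X| = #|(fun _ : X => true)| by apply: eq_card.
  rewrite -eX; lia.
move=> B cB.
have [x0 _] : exists x0 : X, x0 \in S0.
  by apply/set0Pn; rewrite -card_gt0 (tr _ S0t); lia.
apply: hall => // J sJ.
case: (set_0Vmem J) => [->|[j jJ]]; first by rewrite cards0.
have nJ : J != set0 by apply/set0Pn; exists j.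
have := @thin_nat X r tau J (ltnW r2) th sJ nJ.
rewrite bigcup_setD -/(Lset J).
have := cardsID B (Lset J).
have := subset_leq_card (subsetIr (Lset J) B).
rewrite -subn1 in cB; move: (#|Lset J :&: B|) (#|Lset J :\: B|) (#|Lset J|) cB => a b c cB.
move: (#|J|) (#|B|) cB => d e cB. lia.
Qed.
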